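(* Let $3 \leq p \leq q$ be integers. Then the quadratic equation $x^2-(q+3)x+(pq+2)=0$ has two integral roots $p'', q''\in [2,\infty)$ if and only if there exist nonnegative integers $a,b,b',t$ with $1 \leq b,b' < a$, $\gcd(a,b)=1$, $bb' \equiv 1 \pmod a$, and $bb'+t \geq 2$ such that $$p=b(a-b)t+bb'+\frac{b(1-bb')}{a}+1,\qquad q=a^2t+ab',$$ $$p''=\frac{bq}{a}+1,\qquad q''=q+2-\frac{bq}{a}.$$ *)

(* Defs.v *)
From mathcomp Require Import all_boot all_order all_algebra.
Set Implicit Arguments. Unset Strict Implicit. Unset Printing Implicit Defensive.
Import Order.TTheory GRing.Theory Num.Theory.
Local Open Scope ring_scope.

Definition quadPQ (p q : int) : {poly int} :=
  'X^2 - (q + 3)%:P * 'X + (p * q + 2)%:P.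

Definition are_roots (p q r s : int) : Prop :=
  quadPQ p q = ('X - r%:P) * ('X - s%:P).

(* Main.v *)
Require Import Defs.
From mathcomp Require Import all_boot all_order all_algebra.
From mathcomp Require Import ring lra zify.
Import Order.TTheory GRing.Theory Num.Theory.
Local Open Scope ring_scope.

Lemma are_rootsE p q r s : are_roots p q r s <-> (r + s = q + 3 /\ r * s = p*q+2).
Proof.
rewrite /are_roots /quadPQ.
have -> : ('X - r%:P) * ('X - s%:P) = 'X^2 - (r+s)%:P * 'X + (r*s)%:P :> {poly int}.
  rewrite polyCD polyCM; ring.
split.
- move=> H. have H0 := congr1 (fun P : {poly int} => P`_0) H.
  have H1 := congr1 (fun P : {poly int} => P`_1) H.
  rewrite /= !coefE /= in H0 H1. lia.
- by case=> -> ->.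
Qed.


Theorem lemma4p2 (p q : int) (hp : 3 <= p) (hpq : p <= q) :
  (exists p'' q'' : int, 2 <= p'' /\ 2 <= q'' /\ are_roots p q p'' q'')
  <->
  (exists a b b' t : int,
     [/\ 0 <= t, 1 <= b < a, 1 <= b' < a, gcdz a b = 1 &
       (b * b' == 1 %[mod a])%Z] /\
     2 <= b * b' + t /\
     p = b * (a - b) * t + b * b' + (b * (1 - b * b') %/ a)%Z + 1 /\
     q = a ^+ 2 * t + a * b' /\
     are_roots p q ((b * q %/ a)%Z + 1) (q + 2 - (b * q %/ a)%Z)).
Proof.
split; last first.
  case=> a [b [b' [t [[t0 /andP[b1 ba] /andP[b'1 b'a] _ _] [_ [_ [hq hr]]]]]]].
  exists ((b * q %/ a)%Z + 1), (q + 2 - (b * q %/ a)%Z).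
  have E : b * q = (b * (a * t + b')) * a by rewrite hq; ring.
  rewrite E mulzK in hr *; last by lia.
  split; first nia. split; last exact hr. nia.
case=> r [s [r2 [s2 /are_rootsE [Hsum Hprod]]]].
set x := r - 1.
set g := gcdz x q.
have g0 : 0 < g.
  rewrite lt0r /g gcdz_eq0 /= negb_and; apply/andP; split; last by [].
  by apply/orP; right; apply/eqP; lia.
have [b Hb] : exists b, x = b * g.
  by exists (x %/ g)%Z; rewrite divzK // /g dvdz_gcdl.
have [a Ha] : exists a, q = a * g.
  by exists (q %/ g)%Z; rewrite divzK // /g dvdz_gcdr.
have Hab : gcdz a b = 1.
  have H := mulz_gcdl a b g.
  rewrite -Ha -Hb (gcdzC q) -/g abszE (@ger0_norm _ g) in H; last by lia.
  apply: (@mulIf _ g); first by lia.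
  by rewrite H mul1r.
have cop : coprimez a b.
  by move: Hab; rewrite /coprimez /coprime /gcdz => -[->].
have b1 : 1 <= b by nia.
have ba : b < a.
  have : x < q by nia.
  nia.
have E : b * (a * g + 1 - b * g) = (p - 1) * a.
  apply: (@mulIf _ g); first by lia.
  have : x * (q + 1 - x) = (p - 1) * q by nia.
  rewrite Hb Ha => H.
  transitivity (b * g * (a * g + 1 - b * g)); first ring.
  rewrite H; ring.
have [m Hm] : exists m, 1 - b * g = a * m.
  have : (a %| b * (1 - b * g))%Z.
    apply/dvdzP; exists (p - 1 - b * g); nia.
  rewrite Gauss_dvdzr // => /dvdzP [m Hm]; exists m; lia.
set b' := (g %% a)%Z.
set t := (g %/ a)%Z.
have Hg : g = a * t + b' by rewrite /t /b'; lia.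
have a0 : 0 < a by lia.
have t0 : 0 <= t by rewrite /t divz_ge0 //; lia.
have b'0 : 0 <= b' < a.
  by rewrite /b' modz_ge0 ?ltz_pmod //; lia.
have b'1 : 1 <= b'.
  case: (b' =P 0) => Hb0; last by lia.
  exfalso; rewrite Hb0 addr0 in Hg.
  have : a * (m + b * t) = 1.
    transitivity (a * m + b * (a * t)); first ring.
    rewrite -Hm -Hg; ring.
  move: ba b1 (m + b * t); clear -a0; move=> ba b1 k H.
  have a2 : 2 <= a by lia.
  case: (lerP k 0) => hk.
    have : a * k <= 0 by rewrite pmulr_rle0 //.
    lia.
  have : a <= a * k by rewrite ler_peMr //; lia.
  lia.
have Hbb' : b * b' - 1 = (- m - b * t) * a.
  transitivity (- (1 - b * g) - a * b * t + b * (b' + a * t - g)); first ring.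
  have -> : b' + a * t - g = 0 by lia.
  rewrite Hm; ring.
exists a, b, b', t; split.
  split => //; try (apply/andP; lia).
  by rewrite eqz_mod_dvd; apply/dvdzP; exists (- m - b * t).
have Hk : b * (1 - b * b') = a * (p - 1 - b * g + b ^+ 2 * t).
  apply/eqP; rewrite -subr_eq0.
  have -> : b * (1 - b * b') - a * (p - 1 - b * g + b ^+ 2 * t)
          = b * (a * g + 1 - b * g) - (p - 1) * a + b ^+ 2 * (g - a * t - b') by ring.
  have -> : g - a * t - b' = 0 by lia.
  by rewrite E subrr mulr0 addr0.
split.
  case: (lerP 2 (b * b' + t)) => // H; exfalso.
  have Hbb1 : 1 <= b * b'.
    move: b1 b'1; clear; move=> b1 b'1; nia.
  have Ht : t = 0 by lia.
  have Hb1 : b = 1.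
    move: b1 b'1 Hbb1 H Ht; clear; move=> *; nia.
  have Hb'1 : b' = 1.
    move: Hb1 b'1 Hbb1 H Ht; clear; move=> *; nia.
  rewrite Ht Hb'1 mulr0 add0r in Hg.
  rewrite Hg Hb1 !mul1r mulr1 in Hb Ha.
  rewrite /x in Hb.
  have Hr : r = 2 by lia.
  have Hs : s = q + 1 by lia.
  rewrite Hr Hs in Hprod.
  move: Hprod hp hpq; clear; move=> *; nia.
split.
  rewrite Hk mulKz; last by lia.
  have -> : b' = g - a * t by lia.
  ring.
split.
  rewrite Ha Hg; ring.
have -> : b * q = (b * g) * a by rewrite Ha; ring.
rewrite mulzK; last by lia.
rewrite -Hb /x.
apply/are_rootsE; split; first lia.
have -> : q + 2 - (r - 1) = s by lia.
by rewrite subrK.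
Qed.
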